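(* In the Setting below, the decomposition $\mathcal M=N_{\mathcal M}\oplus J_{\mathcal M}$ is a $\mathbb Z_2$-grading of the algebra $\mathcal M$ with even part $N_{\mathcal M}$ and odd part $J_{\mathcal M}$; that is, $N_{\mathcal M}N_{\mathcal M}\subseteq N_{\mathcal M}$, $N_{\mathcal M}J_{\mathcal M}\subseteq J_{\mathcal M}$ and $J_{\mathcal M}J_{\mathcal M}\subseteq N_{\mathcal M}$.
   Context: Setting. Let $\mathbb F$ be a field of characteristic different from $2$ and $3$. A Malcev algebra is an anticommutative algebra $\mathcal M$ over $\mathbb F$ satisfying $(xz)(yt)=((xy)z)t+((yz)t)x+((zt)x)y+((tx)y)z$. Products are left-normed: $xyz=(xy)z$, $xyzt=((xy)z)t$. Put $J(x,y,z)=xyz+yzx+zxy$ (the Jacobian), $\{x,y,z\}=xyz-xzy+2x(yz)$, and $h(y,z,t,x,u)=\{yz,t,u\}x+\{yz,t,x\}u+\{yx,z,u\}t+\{yu,z,x\}t$. The variety $\mathcal H$ consists of the Malcev algebras satisfying $h(y,z,t,x,u)=0$ identically. Let $L=\mathfrak{sl}_2(\mathbb F)$ with basis $E,H,F$ and products $EH=E$, $FH=-F$, $EF=\tfrac12 H$. Standing assumption: $\mathcal M\in\mathcal H$ contains $L$ as a subalgebra and $mL\neq 0$ for every $0\neq m\in\mathcal M$. Define $N_{\mathcal M}=\{m\in\mathcal M: J(m,a,b)=0\ \forall a,b\in L\}$ and $J_{\mathcal M}=\{m\in\mathcal M:\{m,a,b\}=0\ \forall a,b\in L\}$. Known fact (from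 prior work): $\mathcal M=N_{\mathcal M}\oplus J_{\mathcal M}$, and $J_{\mathcal M}$ is a direct sum of $2$-dimensional $L$-submodules with bases $\{u,v\}$, $uH=u$, $vH=-v$, $uE=v$, $uF=0$, $vE=0$, $vF=-u$. *)

(* Defs.v *)
From mathcomp Require Import all_boot all_algebra.
Set Implicit Arguments. Unset Strict Implicit. Unset Printing Implicit Defensive.
Import GRing.Theory.
Local Open Scope ring_scope.

Section MalcevDefs.
Variables (K : fieldType) (M : lmodType K) (mul : M -> M -> M).

Definition prod_bilinear : Prop :=
  (forall (a : K) (x y z : M), mul (a *: x + y) z = a *: mul x z + mul y z) /\
  (forall (a : K) (x y z : M), mul z (a *: x + y) = a *: mul z x + mul z y).

Definition anticommutative : Prop := forall x : M, mul x x = 0.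

Definition malcev_identity : Prop :=
  forall x y z t : M,
    mul (mul x z) (mul y t) =
    mul (mul (mul x y) z) t + mul (mul (mul y z) t) x
    + mul (mul (mul z t) x) y + mul (mul (mul t x) y) z.

Definition is_malcev : Prop :=
  [/\ prod_bilinear, anticommutative & malcev_identity].

Definition jacobian (x y z : M) : M :=
  mul (mul x y) z + mul (mul y z) x + mul (mul z x) y.

Definition trip (x y z : M) : M :=
  mul (mul x y) z - mul (mul x z) y + (mul x (mul y z)) *+ 2.

Definition hpoly (y z t x u : M) : M :=
  mul (trip (mul y z) t u) x + mul (trip (mul y z) t x) u
  + mul (trip (mul y x) z u) t + mul (trip (mul y u) z x) t.

Definition in_variety_H : Prop :=
  is_malcev /\ forall y z t x u : M, hpoly y z t x u = 0.

Definition sl2_triple (e h f : M) : Prop :=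
  [/\ (forall a b c : K, a *: e + b *: h + c *: f = 0 -> [/\ a = 0, b = 0 & c = 0]),
      mul e h = e, mul f h = - f & mul e f = 2%:R^-1 *: h].

Definition inL (e h f : M) (x : M) : Prop :=
  exists a b c : K, x = a *: e + b *: h + c *: f.

Definition inN (e h f : M) (m : M) : Prop :=
  forall a b : M, inL e h f a -> inL e h f b -> jacobian m a b = 0.

Definition inJ (e h f : M) (m : M) : Prop :=
  forall a b : M, inL e h f a -> inL e h f b -> trip m a b = 0.

End MalcevDefs.

(* Main.v *)
Require Import Defs.
From mathcomp Require Import all_boot all_algebra.
Set Implicit Arguments. Unset Strict Implicit. Unset Printing Implicit Defensive.
Import GRing.Theory.
Local Open Scope ring_scope.

Inductive tree := Lf of nat | Nd of tree & tree.
Fixpoint ncmp (i j : nat) : comparison :=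
  match i, j with
  | 0, 0 => Eq | 0, S _ => Lt | S _, 0 => Gt | S i', S j' => ncmp i' j' end.
Lemma ncmp_eq i j : ncmp i j = Eq -> i = j.
Proof. by elim: i j => [|i IH] [|j] //= /IH ->. Qed.
Fixpoint tcmp (a b : tree) : comparison :=
  match a, b with
  | Lf i, Lf j => ncmp i j
  | Lf _, Nd _ _ => Lt
  | Nd _ _, Lf _ => Gt
  | Nd a1 a2, Nd b1 b2 => match tcmp a1 b1 with Eq => tcmp a2 b2 | c => c end
  end.
Lemma tcmp_eq a b : tcmp a b = Eq -> a = b.
Proof.
elim: a b => [i|a1 IH1 a2 IH2] [j|b1 b2] //=.
- by move/ncmp_eq => ->.
- case E: (tcmp a1 b1) => // H2.
  by rewrite (IH1 _ E) (IH2 _ H2).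
Qed.

Inductive expr := EAt of nat | EMul of expr & expr | EAdd of expr & expr
  | EOpp of expr | EZero | EZ of expr & int | EN of expr & nat.

Definition mono := (int * tree)%type.
Definition mkNd (p q : mono) : option mono :=
  match tcmp p.2 q.2 with
  | Eq => None
  | Lt => Some (p.1 * q.1, Nd p.2 q.2)
  | Gt => Some (- (p.1 * q.1), Nd q.2 p.2)
  end.
Fixpoint nf (e : expr) : seq mono :=
  match e with
  | EAt i => [:: (1, Lf i)]
  | EMul a b => let pb := nf b in flatten (map (fun p => pmap (mkNd p) pb) (nf a))
  | EAdd a b => nf a ++ nf b
  | EOpp a => map (fun p => (- p.1, p.2)) (nf a)
  | EZero => [::]
  | EZ a z => map (fun p => (p.1 * z, p.2)) (nf a)
  | EN a n => map (fun p => (p.1 * n%:Z, p.2)) (nf a)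
  end.
Fixpoint ins (p : mono) (l : seq mono) : seq mono :=
  match l with
  | [::] => if p.1 == 0 then [::] else [:: p]
  | q :: l' => match tcmp p.2 q.2 with
     | Lt => if p.1 == 0 then l else p :: l
     | Eq => let c := p.1 + q.1 in if c == 0 then l' else (c, q.2) :: l'
     | Gt => q :: ins p l'
     end
  end.
Definition canon (l : seq mono) := foldr ins [::] l.

Section NA.
Variables (K : fieldType) (M : lmodType K) (mu : M -> M -> M).
Hypothesis mDl : forall x y z, mu (x + y) z = mu x z + mu y z.
Hypothesis mDr : forall x y z, mu x (y + z) = mu x y + mu x z.
Hypothesis mxx : forall x, mu x x = 0.

Lemma m0l y : mu 0 y = 0.
Proof. by apply: (addIr (mu 0 y)); rewrite -mDl !add0r. Qed.
Lemma m0r y : mu y 0 = 0.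
Proof. by apply: (addIr (mu y 0)); rewrite -mDr !add0r. Qed.
Lemma mNl x y : mu (- x) y = - mu x y.
Proof. by apply/eqP; rewrite -addr_eq0 -mDl addNr m0l. Qed.
Lemma mNr x y : mu x (- y) = - mu x y.
Proof. by apply/eqP; rewrite -addr_eq0 -mDr addNr m0r. Qed.
Lemma manti x y : mu x y = - mu y x.
Proof.
apply/eqP; rewrite -addr_eq0; move: (mxx (x + y)).
by rewrite mDl !mDr !mxx add0r addr0 => ->.
Qed.
Lemma mnl x y n : mu (x *+ n) y = mu x y *+ n.
Proof. by elim: n => [|n IH]; rewrite ?mulr0n ?m0l // !mulrS mDl IH. Qed.
Lemma mzl x y z : mu (x *~ z) y = mu x y *~ z.
Proof.
case: z => n; first by rewrite -!pmulrn mnl.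
by rewrite !NegzE !mulrNz mNl -!pmulrn mnl.
Qed.
Lemma mzr x y z : mu x (y *~ z) = mu x y *~ z.
Proof. by rewrite manti mzl -mulNrz -manti. Qed.

Fixpoint tev env t := match t with Lf i => nth 0 env i | Nd a b => mu (tev env a) (tev env b) end.
Definition pev env (l : seq mono) := \sum_(p <- l) tev env p.2 *~ p.1.
Fixpoint eev env e := match e with
  | EAt i => nth 0 env i
  | EMul a b => mu (eev env a) (eev env b)
  | EAdd a b => eev env a + eev env b
  | EOpp a => - eev env a
  | EZero => 0
  | EZ a z => eev env a *~ z
  | EN a n => eev env a *+ n end.

Lemma mu_suml env (l : seq mono) y : mu (pev env l) y = \sum_(p <- l) mu (tev env p.2 *~ p.1) y.
Proof. elim: l => [|p l IH]; first by rewrite /pev !big_nil m0l.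
by rewrite /pev in IH *; rewrite !big_cons mDl IH. Qed.
Lemma mu_sumr env (l : seq mono) y : mu y (pev env l) = \sum_(p <- l) mu y (tev env p.2 *~ p.1).
Proof. elim: l => [|p l IH]; first by rewrite /pev !big_nil m0r.
by rewrite /pev in IH *; rewrite !big_cons mDr IH. Qed.

Lemma pev_cat env l1 l2 : pev env (l1 ++ l2) = pev env l1 + pev env l2.
Proof. by rewrite /pev big_cat. Qed.

Lemma mkNd_spec env p q : (match mkNd p q with Some r => tev env r.2 *~ r.1 | None => 0 end)
   = mu (tev env p.2 *~ p.1) (tev env q.2 *~ q.1).
Proof.
rewrite /mkNd; case E: (tcmp p.2 q.2) => /=.
- by rewrite (tcmp_eq E) mzl mzr mxx !mul0rz.
- by rewrite mzl mzr -mulrzA (mulrC q.1).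
- by rewrite mzl mzr -mulrzA (manti (tev env q.2)) mulrNz mulNrz opprK (mulrC q.1).
Qed.

Lemma pev_pmap env p l : pev env (pmap (mkNd p) l) = mu (tev env p.2 *~ p.1) (pev env l).
Proof.
rewrite mu_sumr /pev; elim: l => [|q l IH]; first by rewrite !big_nil.
rewrite big_cons /=; have := mkNd_spec env p q.
case: (mkNd p q) => [r|] <-; last by rewrite add0r.
by rewrite big_cons IH.
Qed.

Lemma nf_sound env e : eev env e = pev env (nf e).
Proof.
elim: e => [i|a IHa b IHb|a IHa b IHb|a IHa||a IHa z|a IHa n] /=.
- by rewrite /pev big_cons big_nil addr0 mulr1z.
- rewrite IHa IHb mu_suml; elim: (nf a) => [|p l IH]; first by rewrite /pev !big_nil.
  by rewrite /= pev_cat big_cons IH pev_pmap.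
- by rewrite IHa IHb pev_cat.
- rewrite IHa /pev big_map -sumrN; apply: eq_bigr => p _ /=; by rewrite mulrNz.
- by rewrite /pev big_nil.
- rewrite IHa /pev big_map (big_morph (fun x : M => x *~ z) (mulrzDl z) (mul0rz M z)).
  by apply: eq_bigr => p _ /=; rewrite mulrzA.
- rewrite IHa /pev big_map (big_morph (fun x : M => x *+ n) (fun x y => mulrnDl n x y) (mul0rn _ n)).
  apply: eq_bigr => p _ /=.
  by rewrite mulrzA -pmulrn.
Qed.

Lemma pev_ins env p l : pev env (ins p l) = tev env p.2 *~ p.1 + pev env l.
Proof.
elim: l => [|q l IH] /=.
- case: eqP => [->|_]; rewrite /pev ?big_nil ?big_cons ?big_nil ?mulr0z //.
  by rewrite addr0.
- case E: (tcmp p.2 q.2).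
  + rewrite (tcmp_eq E); case: eqP => [H|_]; rewrite /pev !big_cons ?addrA -?mulrzDr ?H ?mulr0z ?add0r //.
  + case: eqP => [->|_]; rewrite /pev ?big_cons ?mulr0z ?add0r //.
  + by rewrite /pev !big_cons -/(pev env l) -/(pev env (ins p l)) IH addrCA.
Qed.

Lemma canon_sound env l : pev env (canon l) = pev env l.
Proof.
elim: l => [|p l IH] //=.
by rewrite pev_ins IH /pev big_cons.
Qed.

Lemma na_zero env e : canon (nf e) = [::] -> eev env e = 0.
Proof. by move=> H; rewrite nf_sound -canon_sound H /pev big_nil. Qed.

End NA.

Lemma na_by1 (K : fieldType) (M : lmodType K) (x y l r : M) (k : int) :
  l = r -> x - y - (l - r) *~ k = 0 -> x = y.
Proof. by move=> -> /eqP; rewrite subrr mul0rz subr0 subr_eq0 => /eqP. Qed.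

Ltac na_mem x l := lazymatch l with
  | nil => constr:(false) | x :: _ => constr:(true) | _ :: ?l' => na_mem x l' end.
Ltac na_atoms mu t l :=
  lazymatch t with
  | mu ?a ?b => let l := na_atoms mu a l in na_atoms mu b l
  | jacobian mu ?a ?b ?c => let l := na_atoms mu a l in let l := na_atoms mu b l in na_atoms mu c l
  | trip mu ?a ?b ?c => let l := na_atoms mu a l in let l := na_atoms mu b l in na_atoms mu c l
  | ?a + ?b => let l := na_atoms mu a l in na_atoms mu b l
  | - ?a => na_atoms mu a l
  | 0 => l
  | ?a *~ _ => na_atoms mu a l
  | ?a *+ _ => na_atoms mu a l
  | _ => let b := na_mem t l in lazymatch b with true => l | false => constr:(t :: l) end
  end.
Ltac na_idx x l := lazymatch l with
  | x :: _ => constr:(0%nat)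
  | _ :: ?l' => let n := na_idx x l' in constr:(S n) end.
Ltac na_reify mu t l :=
  lazymatch t with
  | mu ?a ?b => let ra := na_reify mu a l in let rb := na_reify mu b l in constr:(EMul ra rb)
  | jacobian mu ?a ?b ?c => let ra := na_reify mu a l in let rb := na_reify mu b l in
      let rc := na_reify mu c l in
      constr:(EAdd (EAdd (EMul (EMul ra rb) rc) (EMul (EMul rb rc) ra)) (EMul (EMul rc ra) rb))
  | trip mu ?a ?b ?c => let ra := na_reify mu a l in let rb := na_reify mu b l in
      let rc := na_reify mu c l in
      constr:(EAdd (EAdd (EMul (EMul ra rb) rc) (EOpp (EMul (EMul ra rc) rb))) (EN (EMul ra (EMul rb rc)) 2))
  | ?a + ?b => let ra := na_reify mu a l in let rb := na_reify mu b l in constr:(EAdd ra rb)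
  | - ?a => let ra := na_reify mu a l in constr:(EOpp ra)
  | 0 => constr:(EZero)
  | ?a *~ ?z => let ra := na_reify mu a l in constr:(EZ ra z)
  | ?a *+ ?n => let ra := na_reify mu a l in constr:(EN ra n)
  | _ => let i := na_idx t l in constr:(EAt i)
  end.
Ltac na_close mu mDl mDr mxx :=
  lazymatch goal with |- @eq ?T ?t 0 =>
    let l := na_atoms mu t (@nil T) in
    let r := na_reify mu t l in
    exact (@na_zero _ _ mu mDl mDr mxx l r ltac:(vm_compute; reflexivity))
  end.
Section Main.
Variables (K : fieldType) (M : lmodType K) (mul : M -> M -> M) (e h f : M).
Hypothesis char2 : (2%:R : K) != 0.
Hypothesis char3 : (3%:R : K) != 0.
Hypothesis Hbil : prod_bilinear mul.
Hypothesis mxx : anticommutative mul.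
Hypothesis Hmal : malcev_identity mul.
Hypothesis HL : sl2_triple mul e h f.
Hypothesis Hdec : forall m : M, exists n j : M,
        [/\ inN mul e h f n, inJ mul e h f j & m = n + j].
Hypothesis Hdirect : forall m : M, inN mul e h f m -> inJ mul e h f m -> m = 0.
Hypothesis Hstruct : forall j : M, inJ mul e h f j ->
        exists s : seq ((K * K) * (M * M)),
          (forall p, p \in s ->
             [/\ inJ mul e h f p.2.1 /\ inJ mul e h f p.2.2,
                 mul p.2.1 h = p.2.1 /\ mul p.2.2 h = - p.2.2,
                 mul p.2.1 e = p.2.2,
                 mul p.2.1 f = 0 /\ mul p.2.2 e = 0 &
                 mul p.2.2 f = - p.2.1]) /\
          j = \sum_(p <- s) (p.1.1 *: p.2.1 + p.1.2 *: p.2.2).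

Local Notation jac := (jacobian mul).
Local Notation tr := (trip mul).
Local Notation inN := (inN mul e h f).
Local Notation inJ := (inJ mul e h f).
Local Notation inL := (inL e h f).

Lemma mDl x y z : mul (x + y) z = mul x z + mul y z.
Proof. by have := (Hbil.1 1 x y z); rewrite !scale1r. Qed.
Lemma mDr x y z : mul x (y + z) = mul x y + mul x z.
Proof. by have := (Hbil.2 1 y z x); rewrite !scale1r. Qed.
Lemma mul0l y : mul 0 y = 0.
Proof. exact (@m0l _ _ mul mDl y). Qed.
Lemma mul0r y : mul y 0 = 0.
Proof. exact (@m0r _ _ mul mDr y). Qed.
Lemma mZl a x y : mul (a *: x) y = a *: mul x y.
Proof. by have := (Hbil.1 a x 0 y); rewrite !addr0 mul0l addr0. Qed.
Lemma mZr a x y : mul y (a *: x) = a *: mul y x.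
Proof. by have := (Hbil.2 a x 0 y); rewrite !addr0 mul0r addr0. Qed.

Ltac nac := na_close mul mDl mDr mxx.
Tactic Notation "nau" constr(H) uconstr(k) := refine (na_by1 (k:=k) H _).

Lemma S_id w x y z : jac (mul w x) y z =
   mul w (jac x y z) + mul (jac w y z) x - (jac (mul y z) w x) *+ 2.
Proof.
nau (Hmal w x z y) 1; nau (Hmal w y x z) 1; nau (Hmal w y z x) 1; nac.
Qed.

Lemma eh : mul e h = e. Proof. by case: HL. Qed.
Lemma fh : mul f h = - f. Proof. by case: HL. Qed.
Lemma ef : mul e f = 2%:R^-1 *: h. Proof. by case: HL. Qed.
Lemma ef2 : (mul e f) *+ 2 = h.
Proof. by rewrite ef scalerMnl -mulr_natr mulVf // scale1r. Qed.

Lemma inLe : inL e. Proof. by exists 1, 0, 0; rewrite !scale0r !addr0 scale1r. Qed.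
Lemma inLh : inL h. Proof. by exists 0, 1, 0; rewrite !scale0r add0r addr0 scale1r. Qed.
Lemma inLf : inL f. Proof. by exists 0, 0, 1; rewrite !scale0r !add0r scale1r. Qed.

Lemma jacD1 x y a b : jac (x + y) a b = jac x a b + jac y a b.
Proof. apply/eqP; rewrite -subr_eq0; apply/eqP; nac. Qed.
Lemma jacN1 x a b : jac (- x) a b = - jac x a b.
Proof. apply/eqP; rewrite -subr_eq0; apply/eqP; nac. Qed.
Lemma jacZ1 k x a b : jac (k *: x) a b = k *: jac x a b.
Proof. by rewrite /jacobian !mZl !mZr !mZl !scalerDr. Qed.
Lemma trD1 x y a b : tr (x + y) a b = tr x a b + tr y a b.
Proof. apply/eqP; rewrite -subr_eq0; apply/eqP; nac. Qed.
Lemma trN1 x a b : tr (- x) a b = - tr x a b.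
Proof. apply/eqP; rewrite -subr_eq0; apply/eqP; nac. Qed.
Lemma trZ1 k x a b : tr (k *: x) a b = k *: tr x a b.
Proof. by rewrite /trip !mZl scalerDr scalerBr scalerMnr. Qed.

Lemma inN0 : inN 0.
Proof. move=> a b _ _; nac. Qed.
Lemma inND x y : inN x -> inN y -> inN (x + y).
Proof. by move=> Hx Hy a b Ha Hb; rewrite jacD1 Hx // Hy // addr0. Qed.
Lemma inNN x : inN x -> inN (- x).
Proof. by move=> Hx a b Ha Hb; rewrite jacN1 Hx // oppr0. Qed.
Lemma inNZ k x : inN x -> inN (k *: x).
Proof. by move=> Hx a b Ha Hb; rewrite jacZ1 Hx // scaler0. Qed.
Lemma inJ0 : inJ 0.
Proof. move=> a b _ _; nac. Qed.
Lemma inJD x y : inJ x -> inJ y -> inJ (x + y).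
Proof. by move=> Hx Hy a b Ha Hb; rewrite trD1 Hx // Hy // addr0. Qed.
Lemma inJN x : inJ x -> inJ (- x).
Proof. by move=> Hx a b Ha Hb; rewrite trN1 Hx // oppr0. Qed.
Lemma inJZ k x : inJ x -> inJ (k *: x).
Proof. by move=> Hx a b Ha Hb; rewrite trZ1 Hx // scaler0. Qed.


Lemma half (x : M) : x *+ 2 = 0 -> x = 0.
Proof.
move=> H; rewrite -[x]scale1r -(mulVf char2) -scalerA scaler_nat H scaler0 //.
Qed.
Lemma third (x : M) : x *+ 3 = 0 -> x = 0.
Proof.
move=> H; rewrite -[x]scale1r -(mulVf char3) -scalerA scaler_nat H scaler0 //.
Qed.

Lemma jac_hef : jac h e f = 0.
Proof.
apply: half.
nau (congr1 (mul^~ f) eh) (-2); nau (congr1 (mul^~ e) fh) 2;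
nau (congr1 (mul^~ h) ef2) 1; nac.
Qed.


Lemma mul_suml (I : Type) (s : seq I) (F : I -> M) c :
  mul (\sum_(i <- s) F i) c = \sum_(i <- s) mul (F i) c.
Proof. by elim: s => [|i s IH]; rewrite ?big_nil ?mul0l // !big_cons mDl IH. Qed.

Lemma inJ_sum (s : seq ((K * K) * (M * M))) (F : (K * K) * (M * M) -> M) :
  (forall p, p \in s -> inJ (F p)) -> inJ (\sum_(p <- s) F p).
Proof.
move=> H; rewrite big_seq; apply: (big_ind inJ inJ0 inJD) => p Hp; exact: H.
Qed.

Lemma Jops j : inJ j ->
  [/\ inJ (mul j e), inJ (mul j h), inJ (mul j f) & mul (mul j h) h = j].
Proof.
move=> /Hstruct [s [Hs ->]]; rewrite !mul_suml; split.
- apply: inJ_sum => p /Hs [[Hu Hv] [uh vh] ue [uf ve] vf].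
  by rewrite mDl !mZl ue ve scaler0 addr0; apply: inJZ.
- apply: inJ_sum => p /Hs [[Hu Hv] [uh vh] ue [uf ve] vf].
  by rewrite mDl !mZl uh vh; apply: inJD; apply: inJZ => //; apply: inJN.
- apply: inJ_sum => p /Hs [[Hu Hv] [uh vh] ue [uf ve] vf].
  by rewrite mDl !mZl uf vf scaler0 add0r; apply: inJZ; apply: inJN.
- rewrite big_seq [RHS]big_seq; apply: eq_bigr => p /Hs [[Hu Hv] [uh vh] ue [uf ve] vf].
  by rewrite !mDl !mZl uh vh uh (mNl mDl) vh opprK.
Qed.

Definition pJ m := (- (3%:R : K)^-1) *: mul (jac m e f *+ 2) h.

Lemma jacJ j : inJ j -> jac j e f *+ 2 = - (mul j h *+ 3).
Proof.
move=> Hj; have Ht := Hj e f inLe inLf.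
apply/eqP; rewrite -subr_eq0; apply/eqP.
nau Ht 2; nau (congr1 (mul j) ef2) (-3); nac.
Qed.

Lemma pJ_N n : inN n -> pJ n = 0.
Proof. by move=> Hn; rewrite /pJ (Hn e f inLe inLf) mul0rn mul0l scaler0. Qed.

Lemma pJ_J j : inJ j -> pJ j = j.
Proof.
move=> Hj; have [_ _ _ Hhh] := Jops Hj.
rewrite /pJ (jacJ Hj) (mNl mDl) (mnl mDl) Hhh scaleNr scalerN opprK.
by rewrite -scaler_nat scalerA mulVf // scale1r.
Qed.

Lemma pJD x y : pJ (x + y) = pJ x + pJ y.
Proof. by rewrite /pJ jacD1 mulrnDl mDl scalerDr. Qed.

Lemma pJ_spec m : inJ (pJ m) /\ inN (m - pJ m).
Proof.
have [n [j [Hn Hj ->]]] := Hdec m.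
by rewrite pJD pJ_N // pJ_J // add0r addrK.
Qed.

Lemma pJ_uniq n j : inN n -> inJ j -> pJ (n + j) = j.
Proof. by move=> Hn Hj; rewrite pJD pJ_N // pJ_J // add0r. Qed.

Lemma pJ0 : pJ 0 = 0.
Proof. exact: pJ_N inN0. Qed.
Lemma pJN x : pJ (- x) = - pJ x.
Proof. by apply/eqP; rewrite -addr_eq0 -pJD addNr pJ0. Qed.
Lemma pJMn x n : pJ (x *+ n) = pJ x *+ n.
Proof. by elim: n => [|n IH]; rewrite ?mulr0n ?pJ0 // !mulrS pJD IH. Qed.
Lemma pJB x y : pJ (x - y) = pJ x - pJ y.
Proof. by rewrite pJD pJN. Qed.

Lemma critN m : jac m e f = 0 -> inN m.
Proof.
move=> H; have [_ Hn] := pJ_spec m.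
by move: Hn; rewrite /pJ H mul0rn mul0l scaler0 subr0.
Qed.

Lemma inN_mulc n c : inN n -> inL c -> jac c e f = 0 -> inN (mul n c).
Proof.
move=> Hn Hc Hcef; apply: critN.
nau (S_id n c e f) 1; nau (congr1 (mul^~ c) (Hn e f inLe inLf)) 1;
nau (Hn c h Hc inLh) (-1);
nau (congr1 (fun x => jac x n c) ef2) (-1); nau (congr1 (mul n) Hcef) 1; nac.
Qed.

Lemma jac_eef : jac e e f = 0. Proof. nac. Qed.
Lemma jac_fef : jac f e f = 0. Proof. nac. Qed.

Lemma inN_e n : inN n -> inN (mul n e). Proof. by move=> Hn; apply: inN_mulc inLe jac_eef. Qed.
Lemma inN_h n : inN n -> inN (mul n h). Proof. by move=> Hn; apply: inN_mulc inLh jac_hef. Qed.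
Lemma inN_f n : inN n -> inN (mul n f). Proof. by move=> Hn; apply: inN_mulc inLf jac_fef. Qed.


Lemma pJ_mulc m c : (forall n, inN n -> inN (mul n c)) -> (forall j, inJ j -> inJ (mul j c)) ->
  pJ (mul m c) = mul (pJ m) c.
Proof.
move=> HNc HJc; have [HJ HN] := pJ_spec m.
by rewrite -{1}(subrK (pJ m) m) mDl pJ_uniq //; [apply: HNc | apply: HJc].
Qed.
Lemma pJe m : pJ (mul m e) = mul (pJ m) e.
Proof. by apply: pJ_mulc => [n /inN_e|j /Jops []]. Qed.
Lemma pJh m : pJ (mul m h) = mul (pJ m) h.
Proof. by apply: pJ_mulc => [n /inN_h|j /Jops []]. Qed.
Lemma pJf m : pJ (mul m f) = mul (pJ m) f.
Proof. by apply: pJ_mulc => [n /inN_f|j /Jops []]. Qed.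

Lemma jacA m : jac m e f *+ 2 = - (mul (pJ m) h *+ 3).
Proof.
have [HJ HN] := pJ_spec m.
apply/eqP; rewrite -subr_eq0; apply/eqP.
nau (HN e f inLe inLf) 2; nau (jacJ HJ) 1; nac.
Qed.

Lemma pJpJ m : pJ (pJ m) = pJ m.
Proof. exact: pJ_J (proj1 (pJ_spec m)). Qed.

Lemma pJ_Jh m : pJ (mul (pJ m) h) = mul (pJ m) h.
Proof. by have [HJ _] := pJ_spec m; have [_ Hh _ _] := Jops HJ; rewrite pJ_J. Qed.

Lemma c3rel j1 j2 : inJ j1 -> inJ j2 ->
  mul (pJ (mul j1 j2)) h = pJ (mul j1 (mul j2 h)) + pJ (mul (mul j1 h) j2).
Proof.
move=> H1 H2.
have eq1 : mul (mul j1 j2) h *+ 2 + mul j1 (mul j2 h) + mul (mul j1 h) j2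
           = mul (pJ (mul j1 j2)) h *+ 3.
  nau (S_id j1 j2 e f) 2; nau (jacA (mul j1 j2)) (-1); nau (congr1 (mul j1) (jacJ H2)) 1;
  nau (congr1 (mul^~ j2) (jacJ H1)) 1; nau (congr1 (fun x => jac x j1 j2) ef2) (-2); nac.
have := congr1 pJ eq1; rewrite !pJD !pJh !pJpJ.
move=> E; nau E (-1); nac.
Qed.

Lemma c3key x y : inJ x -> inJ y -> pJ (mul x y) + pJ (mul (mul x h) (mul y h)) *+ 2 = 0.
Proof.
move=> Hx Hy.
have [Hxe Hxh Hxf Hxhh] := Jops Hx.
have [Hye Hyh Hyf Hyhh] := Jops Hy.
have [_ _ _ Hwhh] := Jops (proj1 (pJ_spec (mul x y))).
have R1 := c3rel Hx Hy.
have R2 := c3rel Hx Hyh; rewrite Hyhh in R2.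
have R3 := c3rel Hxh Hy; rewrite Hxhh in R3.
nau (congr1 (mul^~ h) R1) (-1); nau Hwhh 1; nau R2 (-1); nau R3 (-1); nac.
Qed.

Lemma case3 j1 j2 : inJ j1 -> inJ j2 -> pJ (mul j1 j2) = 0.
Proof.
move=> H1 H2.
have [_ H1h _ H1hh] := Jops H1.
have [_ H2h _ H2hh] := Jops H2.
have K1 := c3key H1 H2. have K2 := c3key H1h H2h. rewrite H1hh H2hh in K2.
apply: third; nau K1 (-1); nau K2 2; nac.
Qed.


Lemma c1i x y : inN x -> inN y -> jac x y h *+ 2 = mul (pJ (mul x y)) h *+ 3.
Proof.
move=> Hx Hy.
nau (S_id x y e f) 2; nau (jacA (mul x y)) (-1); nau (congr1 (mul x) (Hy e f inLe inLf)) 2;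
nau (congr1 (mul^~ y) (Hx e f inLe inLf)) 2; nau (congr1 (fun z => jac z x y) ef2) (-2); nac.
Qed.

Lemma c1ii x y : inN x -> inN y ->
  mul (pJ (mul x y)) h = - (pJ (mul (mul x h) y) + pJ (mul x (mul y h))) *+ 2.
Proof.
move=> Hx Hy.
have eq1 : mul (mul x y) h *+ 2 = mul x (mul y h) *+ 2 + mul (mul x h) y *+ 2 + mul (pJ (mul x y)) h *+ 3.
  nau (c1i Hx Hy) 1; nac.
have := congr1 pJ eq1; rewrite !pJD !pJh !pJpJ => E.
nau E (-1); nac.
Qed.

Lemma c1iii n1 n2 : inN n1 -> inN n2 -> pJ (mul (mul n1 h) n2) = 0.
Proof.
move=> H1 H2.
have H1h := inN_h H1. have H2h := inN_h H2.
have E : (mul (pJ (mul (mul n1 h) n2)) h *+ 3) *+ 3 = 0.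
  nau (S_id h n1 n2 h) (-2); nau (c1i H1h H2) (-1); nau (congr1 (mul^~ h) (c1i H1 H2)) 1;
  nau (c1i H1 H2h) 2; nau (congr1 (mul^~ h) (c1ii H1 H2)) 3; nac.
have [_ _ _ Hhh] := Jops (proj1 (pJ_spec (mul (mul n1 h) n2))).
by rewrite -Hhh (third (third E)) mul0l.
Qed.

Lemma case1 n1 n2 : inN n1 -> inN n2 -> pJ (mul n1 n2) = 0.
Proof.
move=> H1 H2.
have E := c1ii H1 H2.
rewrite c1iii // (manti mDl mDr mxx n1 (mul n2 h)) pJN c1iii // oppr0 addr0 oppr0 mul0rn in E.
have [_ _ _ Hhh] := Jops (proj1 (pJ_spec (mul n1 n2))).
by rewrite -Hhh E mul0l.
Qed.


Local Notation pN m := (m - pJ m).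

Lemma factB m a b : inL a -> inL b -> tr m a b = mul (pN m) (mul a b) *+ 3.
Proof.
move=> Ha Hb; have [HJ HN] := pJ_spec m.
nau (HN a b Ha Hb) 1; nau (HJ a b Ha Hb) 1; nac.
Qed.

Lemma E1gen n j a b : inN n -> inJ j -> inL a -> inL b ->
  jac n j (mul a b) = mul (pN (mul n j)) (mul a b) *+ 3 - mul (mul n (mul a b)) j *+ 3.
Proof.
move=> Hn Hj Ha Hb.
nau (S_id n j a b) (-1); nau (factB (mul n j) Ha Hb) 1; nau (congr1 (mul^~ j) (Hn a b Ha Hb)) (-1);
nau (congr1 (mul n) (Hj a b Ha Hb)) (-1); nac.
Qed.

Lemma E2gen n j a b :
  (forall x, inN x -> inN (mul x (mul a b))) -> (forall x, inJ x -> inJ (mul x (mul a b))) ->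
  inN n -> inJ j -> inL a -> inL b ->
  pN (mul n (mul j (mul a b))) = pN (mul (mul n (mul a b)) j) *+ 2 - mul (pN (mul n j)) (mul a b) *+ 2.
Proof.
move=> HNc HJc Hn Hj Ha Hb.
have pJc m : pJ (mul m (mul a b)) = mul (pJ m) (mul a b) by apply: pJ_mulc.
have eqA : mul (mul n j) (mul a b) = mul n (mul j (mul a b)) + mul (mul n (mul a b)) j
    + mul (pN (mul n j)) (mul a b) *+ 3 - mul (mul n (mul a b)) j *+ 3.
  nau (E1gen Hn Hj Ha Hb) 1; nac.
have := congr1 pJ eqA; rewrite !(pJD, pJN, pJc, pJpJ) => eqB.
nau eqA (-1); nau eqB 1; nac.
Qed.


Lemma hf : mul h f = f.
Proof. by rewrite (manti mDl mDr mxx h f) fh opprK. Qed.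
Lemma fe_ef : mul f e = - mul e f.
Proof. exact: (manti mDl mDr mxx f e). Qed.

Lemma inN_ef x : inN x -> inN (mul x (mul e f)).
Proof. by move=> Hx; rewrite ef mZr; apply: inNZ; apply: inN_h. Qed.
Lemma inN_fe x : inN x -> inN (mul x (mul f e)).
Proof. by move=> Hx; rewrite fe_ef (mNr mDr); apply: inNN; apply: inN_ef. Qed.
Lemma inJ_ef x : inJ x -> inJ (mul x (mul e f)).
Proof. by move=> Hx; rewrite ef mZr; apply: inJZ; have [] := Jops Hx. Qed.
Lemma inJ_fe x : inJ x -> inJ (mul x (mul f e)).
Proof. by move=> Hx; rewrite fe_ef (mNr mDr); apply: inJN; apply: inJ_ef. Qed.

Lemma inLef : inL (mul e f).
Proof. by exists 0, (2%:R^-1), 0; rewrite !scale0r add0r addr0 ef. Qed.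

Lemma E1e x y : inN x -> inJ y -> jac x y e = mul (pN (mul x y)) e *+ 3 - mul (mul x e) y *+ 3.
Proof. by move=> Hx Hy; have := E1gen Hx Hy inLe inLh; rewrite eh. Qed.
Lemma E1f x y : inN x -> inJ y -> jac x y f = mul (pN (mul x y)) f *+ 3 - mul (mul x f) y *+ 3.
Proof. by move=> Hx Hy; have := E1gen Hx Hy inLh inLf; rewrite hf. Qed.

Lemma E2e x y : inN x -> inJ y ->
  pN (mul x (mul y e)) = pN (mul (mul x e) y) *+ 2 - mul (pN (mul x y)) e *+ 2.
Proof.
move=> Hx Hy.
have HN : forall z, inN z -> inN (mul z (mul e h)) by move=> z Hz; rewrite eh; apply: inN_e.
have HJ : forall z, inJ z -> inJ (mul z (mul e h)) by move=> z Hz; rewrite eh; have [] := Jops Hz.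
by have := E2gen HN HJ Hx Hy inLe inLh; rewrite eh.
Qed.
Lemma E2f x y : inN x -> inJ y ->
  pN (mul x (mul y f)) = pN (mul (mul x f) y) *+ 2 - mul (pN (mul x y)) f *+ 2.
Proof.
move=> Hx Hy.
have HN : forall z, inN z -> inN (mul z (mul h f)) by move=> z Hz; rewrite hf; apply: inN_f.
have HJ : forall z, inJ z -> inJ (mul z (mul h f)) by move=> z Hz; rewrite hf; have [] := Jops Hz.
by have := E2gen HN HJ Hx Hy inLh inLf; rewrite hf.
Qed.
Lemma E2ef x y : inN x -> inJ y ->
  pN (mul x (mul y (mul e f))) = pN (mul (mul x (mul e f)) y) *+ 2 - mul (pN (mul x y)) (mul e f) *+ 2.
Proof. by move=> Hx Hy; apply: E2gen => //; [apply: inN_ef|apply: inJ_ef|apply: inLe|apply: inLf]. Qed.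
Lemma E2fe x y : inN x -> inJ y ->
  pN (mul x (mul y (mul f e))) = pN (mul (mul x (mul f e)) y) *+ 2 - mul (pN (mul x y)) (mul f e) *+ 2.
Proof. by move=> Hx Hy; apply: E2gen => //; [apply: inN_fe|apply: inJ_fe|apply: inLf|apply: inLe]. Qed.

Lemma Ulem n j c d : inN n -> inJ j -> inN (mul n c) -> inJ (mul j d) -> inL c -> inL d ->
  (forall x y, inN x -> inJ y -> jac x y d = mul (pN (mul x y)) d *+ 3 - mul (mul x d) y *+ 3) ->
  (forall x y, inN x -> inJ y -> jac x y c = mul (pN (mul x y)) c *+ 3 - mul (mul x c) y *+ 3) ->
  mul (pN (mul (mul n c) j)) d *+ 3 - mul (mul (mul n c) d) j *+ 3
  = mul (mul (pN (mul n j)) d) c *+ 3 - mul (mul (mul n d) j) c *+ 3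
    - mul n (mul j (mul d c)) *+ 3 + mul (pN (mul n (mul j d))) c *+ 6 - mul (mul n c) (mul j d) *+ 6.
Proof.
move=> Hn Hj Hnc Hjd Hc Hd E1d E1c.
nau (S_id c n j d) (-1); nau (congr1 (mul^~ n) (Hj d c Hd Hc)) (-1); nau (E1d _ _ Hnc Hj) (-1);
nau (congr1 (mul^~ c) (E1d _ _ Hn Hj)) 1; nau (E1c _ _ Hn Hjd) 2; nac.
Qed.

Lemma key2 n j : inN n -> inJ j -> pN (mul n (mul j (mul e f))) = 0.
Proof.
move=> Hn Hj.
have [Hje _ Hjf _] := Jops Hj.
have Hne := inN_e Hn. have Hnf := inN_f Hn.
have U1 := Ulem Hn Hj Hnf Hje inLf inLe E1e E1f.
have U2 := Ulem Hn Hj Hne Hjf inLe inLf E1f E1e.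
have V1 := congr1 pJ U1; rewrite !(pJD, pJN, pJe, pJf, pJpJ) in V1.
have V2 := congr1 pJ U2; rewrite !(pJD, pJN, pJe, pJf, pJpJ) in V2.
have LieEF : mul n (mul e f) = mul (mul n e) f - mul (mul n f) e.
  apply/eqP; rewrite -subr_eq0; apply/eqP; nau (Hn e f inLe inLf) (-1); nac.
have LieFE : mul n (mul f e) = mul (mul n f) e - mul (mul n e) f.
  apply/eqP; rewrite -subr_eq0; apply/eqP; nau (Hn f e inLf inLe) (-1); nac.
have L1 := congr1 (mul^~ j) LieEF.
have L2 := congr1 (fun x => pJ (mul x j)) LieEF; rewrite /= mDl (mNl mDl) pJD pJN in L2.
have L3 := congr1 (mul^~ j) LieFE.
have L4 := congr1 (fun x => pJ (mul x j)) LieFE; rewrite /= mDl (mNl mDl) pJD pJN in L4.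
have HP := (proj2 (pJ_spec (mul n j))) e f inLe inLf.
apply: third.
nau U1 2; nau V1 (-2); nau U2 (-2); nau V2 2; nau (E2ef Hn Hj) (-3); nau (E2fe Hn Hj) 6;
nau (congr1 (mul^~ f) (E2e Hn Hj)) 12; nau (E2e Hnf Hj) (-12);
nau (congr1 (mul^~ e) (E2f Hn Hj)) (-12); nau (E2f Hne Hj) 12;
nau L1 (-18); nau L2 6; nau L4 (-12); nau HP (-18); nac.
Qed.


Lemma pJZ k x : pJ (k *: x) = k *: pJ x.
Proof.
have [HJ HN] := pJ_spec x.
by rewrite -{1}(subrK (pJ x) x) scalerDr pJ_uniq //; [apply: inNZ | apply: inJZ].
Qed.

Lemma case2 n j : inN n -> inJ j -> pN (mul n j) = 0.
Proof.
move=> Hn Hj.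
have [_ Hjh _ Hjhh] := Jops Hj.
have := key2 Hn Hjh.
rewrite ef mZr Hjhh mZr pJZ -scalerBr => /eqP; rewrite scaler_eq0 invr_eq0 (negbTE char2) /=.
by move/eqP.
Qed.

Lemma mainSec x y :
    [/\ (inN x -> inN y -> inN (mul x y)),
        (inN x -> inJ y -> inJ (mul x y)) &
        (inJ x -> inJ y -> inN (mul x y))].
Proof.
split.
- move=> Hx Hy; have [_ HN] := pJ_spec (mul x y).
  by rewrite case1 // subr0 in HN.
- move=> Hx Hy; have [HJ _] := pJ_spec (mul x y).
  have E := case2 Hx Hy.
  have -> : mul x y = pJ (mul x y) by apply/eqP; rewrite -subr_eq0 E.
  exact: HJ.
- move=> Hx Hy; have [_ HN] := pJ_spec (mul x y).
  by rewrite case3 // subr0 in HN.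
Qed.

End Main.

Theorem mainTheorem5 (K : fieldType) (M : lmodType K) (mul : M -> M -> M)
    (e h f : M)
    (char2 : (2%:R : K) != 0) (char3 : (3%:R : K) != 0)
    (HM : in_variety_H mul)
    (HL : sl2_triple mul e h f)
    (Hfaith : forall m : M, m != 0 -> exists a : M, inL e h f a /\ mul m a != 0)
    (Hdec : forall m : M, exists n j : M,
        [/\ inN mul e h f n, inJ mul e h f j & m = n + j])
    (Hdirect : forall m : M, inN mul e h f m -> inJ mul e h f m -> m = 0)
    (Hstruct : forall j : M, inJ mul e h f j ->
        exists s : seq ((K * K) * (M * M)),
          (forall p, p \in s ->
             [/\ inJ mul e h f p.2.1 /\ inJ mul e h f p.2.2,
                 mul p.2.1 h = p.2.1 /\ mul p.2.2 h = - p.2.2,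
                 mul p.2.1 e = p.2.2,
                 mul p.2.1 f = 0 /\ mul p.2.2 e = 0 &
                 mul p.2.2 f = - p.2.1]) /\
          j = \sum_(p <- s) (p.1.1 *: p.2.1 + p.1.2 *: p.2.2)) :
  forall x y : M,
    [/\ (inN mul e h f x -> inN mul e h f y -> inN mul e h f (mul x y)),
        (inN mul e h f x -> inJ mul e h f y -> inJ mul e h f (mul x y)) &
        (inJ mul e h f x -> inJ mul e h f y -> inN mul e h f (mul x y))].
Proof.
move: HM => [[Hbil Hanti Hmal] _] x y.
exact: (mainSec char2 char3 Hbil Hanti Hmal HL Hdec Hstruct).
Qed.
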